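(* Let $g\in\mathscr H$. For every $f\in\mathscr H$ such that $L(f)=g$, one has $\operatorname{val} f\in\{\pi(\operatorname{val} g)\}\cup-\mathcal S(L)$.
   Context: Let $\mathbf K$ be a field and $\ell\geq 2$ an integer. Let $\mathscr H$ be the field of Hahn series $f=\sum_{\gamma\in\mathbb Q}f_\gamma z^\gamma$ with coefficients in $\mathbf K$ and well-ordered support $\operatorname{supp} f=\{\gamma: f_\gamma\neq 0\}$, with $\operatorname{val} f=\min\operatorname{supp} f$ ($\operatorname{val}0=+\infty$). Let $\phi_\ell$ be the automorphism $f(z)\mapsto f(z^\ell)$. Let $L=a_n\phi_\ell^n+\dots+a_0$ with $n\geq1$, $a_i\in\mathbf K[z]$, $a_0a_n\neq0$, acting by $L(f)=\sum_i a_i f(z^{\ell^i})$. Let $\mathcal P(L)=\{(\ell^i,j): 0\le i\le n,\ j\in\operatorname{supp} a_i\}$. The Newton polygon $\mathcal N(L)$ is the convex hull of $\{(\ell^i,j): 0\le i\le n,\ j\geq\operatorname{val} a_i\}\subset\mathbb R^2$; the slopes of its non-vertical edges form the set $\mathcal S(L)$, and $-\mathcal S(L)=\{-\mu:\mu\in\mathcal S(L)\}$. Define $\pi(q)=\max\{(q-j)/\ell^i:(\ell^i,j)\in\mathcal P(L)\}$ for $q\in\mathbb Q$, and $\pi(+\infty)=+\infty$. *)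

(* Defs.v *)
From Stdlib Require Import ClassicalEpsilon.
From mathcomp Require Import all_boot all_order all_algebra.
Set Implicit Arguments. Unset Strict Implicit. Unset Printing Implicit Defensive.
Import Order.TTheory GRing.Theory Num.Theory.
Local Open Scope ring_scope.

Section Hahn.
Variable K : fieldType.

(* A Hahn series with rational exponents is represented by its coefficient
   function f : rat -> K (f g = coefficient of z^g); it is a Hahn series when
   its support is well ordered: every nonempty subset of the support has a
   least element. *)
Definition hahn (f : rat -> K) : Prop :=
  forall A : rat -> Prop, (exists x, A x) -> (forall x, A x -> f x != 0) ->
    exists m, A m /\ forall y, A y -> m <= y.

Definition is_min_supp (f : rat -> K) (m : rat) : Prop :=
  f m != 0 /\ forall y, f y != 0 -> m <= y.

(* valuation: min of the support, None standing for +infinity *)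
Definition hval (f : rat -> K) : option rat :=
  match excluded_middle_informative (exists m, is_min_supp f m) with
  | left H => Some (proj1_sig (constructive_indefinite_description _ H))
  | right _ => None
  end.

(* The operator L = a_n phi_l^n + ... + a_0; coefficient of z^gamma in
   L(f) = sum_i a_i(z) f(z^(l^i)). *)
Definition Lop (l n : nat) (a : nat -> {poly K}) (f : rat -> K) : rat -> K :=
  fun gamma => \sum_(i < n.+1) \sum_(j < size (a i))
     (a i)`_j * f ((gamma - j%:R) / (l ^ i)%:R).

(* P(L), encoded by the pairs (i, j) standing for the point (l^i, j). *)
Definition PL (n : nat) (a : nat -> {poly K}) : seq (nat * nat) :=
  [seq ij <- [seq (i, j) | i <- iota 0 n.+1, j <- iota 0 (size (a i))]
     | (a ij.1)`_ij.2 != 0].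

Definition piL (l n : nat) (a : nat -> {poly K}) (q : option rat) : option rat :=
  match q with
  | None => None
  | Some q =>
    let v ij := (q - (ij.2)%:R) / (l ^ ij.1)%:R in
    Some (foldr (fun ij m => Num.max m (v ij)) (v (head (0, 0)%N (PL n a))) (PL n a))
  end.

(* The generating set of the Newton polygon:
   {(l^i, y) : 0 <= i <= n, y >= val a_i} (rational points). *)
Definition NPgen (l n : nat) (a : nat -> {poly K}) (x y : rat) : Prop :=
  exists i : nat, (i <= n)%N /\ x = (l ^ i)%:R /\
    exists j0 : nat, (a i)`_j0 != 0 /\ j0%:R <= y.

(* mu is the slope of a non-vertical edge of N(L): the non-vertical line
   y = mu x + c supports N(L) (the generating set lies on or above it) and
   meets it in a segment of positive length (two points with distinct x). *)
Definition slopeL (l n : nat) (a : nat -> {poly K}) (mu : rat) : Prop :=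
  exists c : rat,
    (forall x y, NPgen l n a x y -> mu * x + c <= y) /\
    exists x1 y1 x2 y2, NPgen l n a x1 y1 /\ NPgen l n a x2 y2 /\ x1 != x2 /\
      y1 = mu * x1 + c /\ y2 = mu * x2 + c.

End Hahn.

(* Main.v *)
Require Import Defs.
From Stdlib Require Import Classical ClassicalEpsilon.
From mathcomp Require Import all_boot all_order all_algebra.
From mathcomp Require Import ring lra.
Import Order.TTheory GRing.Theory Num.Theory.
Local Open Scope ring_scope.
Set Implicit Arguments. Unset Strict Implicit.

Lemma hval_some (K : fieldType) (f : rat -> K) m : is_min_supp f m -> hval f = Some m.
Proof.
move=> hm; rewrite /hval; case: excluded_middle_informative => [H|H]; last first.
  by exfalso; apply: H; exists m.
case: (constructive_indefinite_description _ H) => x [fx xmin] /=.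
case: hm => fm mmin; congr Some; apply/le_anti; rewrite xmin // mmin //.
Qed.

Lemma hval_none (K : fieldType) (f : rat -> K) : (forall y, f y = 0) -> hval f = None.
Proof.
move=> h; rewrite /hval; case: excluded_middle_informative => [H|//].
by exfalso; case: H => m [fm _]; rewrite h eqxx in fm.
Qed.

Lemma mem_PL (K : fieldType) n (a : nat -> {poly K}) i j :
  ((i, j) \in PL n a) = [&& (i <= n)%N, (j < size (a i))%N & (a i)`_j != 0].
Proof.
rewrite /PL mem_filter.
apply/idP/idP => [/andP [h1 h2]|].
  case/allpairsPdep: h2 => x [y [hx hy [ex ey]]]; subst x y.
  rewrite mem_iota add0n ltnS leq0n in hx; rewrite mem_iota add0n leq0n in hy. move: hx hy h1 => /= -> -> ->. by [].
case/and3P=> h1 h2 h3; rewrite h3 andTb; apply/allpairsPdep; exists i, j.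
by rewrite !mem_iota /= add0n ltnS h1 h2.
Qed.

Lemma argmin_seq (T : eqType) (s : seq T) (w : T -> rat) : s != [::] ->
  exists2 x, x \in s & forall y, y \in s -> w x <= w y.
Proof.
elim: s => [//|x s IH] _.
case: (eqVneq s [::]) => [->|sn].
  by exists x; rewrite ?mem_head // => y; rewrite inE => /eqP ->.
have [x' hx' hmin] := IH sn.
case: (leP (w x) (w x')) => hle.
  exists x; first exact: mem_head.
  move=> y; rewrite inE => /orP [/eqP ->//|/hmin]; exact: le_trans.
exists x'; first by rewrite inE hx' orbT.
move=> y; rewrite inE => /orP [/eqP ->|/hmin //]; exact: ltW.
Qed.

Lemma foldr_max_le (T : eqType) (h : T -> rat) (s : seq T) x0 B :
  x0 <= B -> (forall x, x \in s -> h x <= B) ->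
  foldr (fun ij m => Num.max m (h ij)) x0 s <= B.
Proof.
move=> h0; elim: s => [//|x s IH] hs /=.
rewrite ge_max hs ?mem_head // andbT; apply: IH => y hy; apply: hs; by rewrite inE hy orbT.
Qed.

Lemma foldr_max_ge (T : eqType) (h : T -> rat) (s : seq T) x0 x :
  x \in s -> h x <= foldr (fun ij m => Num.max m (h ij)) x0 s.
Proof.
elim: s => [//|y s IH] /=; rewrite inE => /orP [/eqP ->|hx]; rewrite le_max.
  by rewrite lexx orbT.
by rewrite IH.
Qed.

Lemma L1 (d v g j : rat) : v * d <= g - j -> g < j + d * v -> False.
Proof. move=> h1 h2; lra. Qed.
Lemma L2 (v d m j y : rat) : m <= j + d * v -> j <= y -> - v * d + m <= y.
Proof. move=> h1 h2; lra. Qed.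
Lemma L3 (v d m j : rat) : m <= j + d * v -> m - j <= v * d.
Proof. move=> h1; lra. Qed.

Theorem mainTheorem4 (K : fieldType) (l n : nat) (a : nat -> {poly K})
  (hl : (2 <= l)%N) (hn : (1 <= n)%N) (ha0 : a 0%N != 0) (han : a n != 0)
  (g : rat -> K) (hg : hahn g) :
  forall f : rat -> K, hahn f -> (forall gamma, Lop l n a f gamma = g gamma) ->
    hval f = piL l n a (hval g) \/
    exists mu : rat, slopeL l n a mu /\ hval f = Some (- mu).
Proof.
move=> f hf hL.
case: (classic (exists y, f y != 0)) => [Hex|Hno]; last first.
  have f0 : forall y, f y = 0.
    by move=> y; apply/eqP; apply: negbNE; apply/negP => hy; apply: Hno; exists y.
  have g0 : forall y, g y = 0.
    move=> y; rewrite -hL /Lop big1 // => i _; apply: big1 => j _; by rewrite f0 mulr0.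
  by left; rewrite (hval_none f0) (hval_none g0).
have [v [fv vmin]] := hf (fun x => f x != 0) Hex (fun x h => h).
have hvf : hval f = Some v by apply: hval_some.
have lpos : (0 < l)%N by apply: leq_trans hl.
have dpos : forall i, 0 < (l ^ i)%:R :> rat by move=> i; rewrite ltr0n expn_gt0 lpos.
pose w := fun ij : nat * nat => (ij.2)%:R + (l ^ ij.1)%:R * v : rat.
have key_lt : forall gamma i j, gamma < w (i, j) ->
    f ((gamma - j%:R) / (l ^ i)%:R) = 0.
  move=> gamma i j hlt; case: (eqVneq (f ((gamma - j%:R) / (l ^ i)%:R)) 0) => // hy.
  have := vmin _ hy; rewrite ler_pdivlMr // => hle; move: hlt; rewrite /w /=.
  move=> hlt; exfalso; exact: L1 hle hlt.
have PLne : PL n a != [::].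
  have : (0%N, (size (a 0%N)).-1) \in PL n a.
    rewrite mem_PL leq0n /= -lead_coefE lead_coef_eq0 ha0 andbT.
    by rewrite prednK // size_poly_gt0.
  by case: (PL n a).
have [[i0 j0] h0in h0min] := argmin_seq w PLne.
move: (h0in); rewrite mem_PL => /and3P [hi0 hj0 ha0j].
pose m := w (i0, j0).
case: (classic (exists ij, ij \in PL n a /\ ij.1 != i0 /\ w ij = m)) =>
    [[[i1 j1] [h1in [hneq hw]]] | Hno].
  right; exists (- v); split; last by rewrite opprK.
  exists m; split.
    move=> x y [i [hi [-> [j' [haj hj']]]]].
    have hjs : (j' < size (a i))%N.
      by rewrite ltnNge; apply: contra haj => h; rewrite nth_default.
    have := h0min (i, j'); rewrite mem_PL hi hjs haj => /(_ isT).
    move=> hle; exact: L2 hle hj'.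
  move: (h1in); rewrite mem_PL => /and3P [hi1 hj1 ha1j].
  exists (l ^ i0)%:R, j0%:R, (l ^ i1)%:R, j1%:R.
  split; first by exists i0; split => //; split => //; exists j0; split.
  split; first by exists i1; split => //; split => //; exists j1; split.
  split; first by rewrite eqr_nat eqn_exp2l // eq_sym.
  split; first by rewrite /m /w /=; ring.
  by rewrite -hw /w /=; ring.
have hgt : forall i j, (i <= n)%N -> (j < size (a i))%N -> (a i)`_j != 0 ->
    (i, j) != (i0, j0) -> m < w (i, j).
  move=> i j hi hj haj hne; rewrite lt_neqAle h0min ?mem_PL ?hi ?hj ?haj // andbT.
  apply/eqP => E; case: (eqVneq i i0) => [ei|ni].
    subst i; move: E; rewrite /m /w /= => /(congr1 (fun t => t - (l ^ i0)%:R * v)).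
    rewrite !addrK => /eqP; rewrite eqr_nat => /eqP ej.
    by move: hne; rewrite ej eqxx.
  by apply: Hno; exists (i, j); rewrite mem_PL hi hj haj.
have tz : forall gamma i j, (i <= n)%N -> (j < size (a i))%N ->
    ((a i)`_j != 0 -> gamma < w (i, j)) ->
    (a i)`_j * f ((gamma - j%:R) / (l ^ i)%:R) = 0.
  move=> gamma i j hi hj h; case: (eqVneq ((a i)`_j) 0) => [->|hz]; first by rewrite mul0r.
  by rewrite key_lt ?mulr0 // h.
have hv0 : (m - j0%:R) / (l ^ i0)%:R = v.
  rewrite /m /w /=; field; by rewrite lt0r_neq0.
have hi0' : (i0 < n.+1)%N by [].
have gm : g m = (a i0)`_j0 * f v.
  rewrite -hL /Lop (bigD1 (Ordinal hi0')) //= (bigD1 (Ordinal hj0)) //= hv0.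
  rewrite big1 ?addr0; last first.
    move=> j hj; apply: tz => // haj; apply: hgt => //.
    by apply/negP => /eqP [E]; move: hj; rewrite -val_eqE /= E eqxx.
  rewrite big1 ?addr0 // => i hi; apply: big1 => j _; apply: tz => // [|haj].
    by rewrite -ltnS.
  apply: hgt => //; first by rewrite -ltnS.
  by apply/negP => /eqP [E _]; move: hi; rewrite -val_eqE /= E eqxx.
have hvg : hval g = Some m.
  apply: hval_some; split; first by rewrite gm mulf_neq0.
  move=> y; apply: contraR; rewrite -ltNge => hy.
  rewrite -hL /Lop big1 // => i _; apply: big1 => j _; apply: tz => // [|haj].
    by rewrite -ltnS.
  apply: lt_le_trans hy _; apply: h0min; rewrite mem_PL haj andbT -ltnS ltn_ord /=.
  by [].
left; rewrite hvf hvg /piL; congr Some.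
have bnd : forall ij, ij \in PL n a -> (m - (ij.2)%:R) / (l ^ ij.1)%:R <= v.
  move=> [i j] hij; have := h0min _ hij; rewrite ler_pdivrMr // => hle; exact: L3 hle.
have hhead : head (0, 0)%N (PL n a) \in PL n a.
  by move: PLne; case: (PL n a) => // x s _; rewrite mem_head.
move: (PL n a) h0in bnd hhead => s h0in bnd hhead.
apply/le_anti/andP; split.
  apply: le_trans (foldr_max_ge (fun ij : nat * nat => (m - (ij.2)%:R) / (l ^ ij.1)%:R) _ h0in).
  by rewrite /= hv0.
by apply: foldr_max_le => //; apply: bnd.
Qed.
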